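(* Let $\mathcal{L}$ be an intuitionistic abstract logic. Then $(Expr_{\mathcal{L}},\le)$, with meet $\wedge$, join $\vee$, implication $\to$, least element $\bot$ and greatest element $\top$, is a Heyting algebra.
   Context: An abstract logic is a triple $\mathcal{L}=(Expr_{\mathcal{L}},Th_{\mathcal{L}},\mathcal{C}_{\mathcal{L}})$ where $Expr_{\mathcal{L}}$ is a set, $Th_{\mathcal{L}}$ a non-empty set of subsets of $Expr_{\mathcal{L}}$ (theories) closed under intersections of non-empty subfamilies, and $\mathcal{C}_{\mathcal{L}}$ a set of operations on $Expr_{\mathcal{L}}$. $\mathcal{L}$ is closed under union of chains if the union of every non-empty chain of theories is a theory. A theory $T$ is prime if $T=\bigcap\mathcal{T}$ with $\mathcal{T}\subseteq Th_{\mathcal{L}}$ non-empty finite implies $T\in\mathcal{T}$; totally prime if this holds for non-empty $\mathcal{T}$ of any size. $PTh_{\mathcal{L}}$, $TPTh_{\mathcal{L}}$ denote these sets. An intuitionistic abstract logic is one closed under union of chains with binary connectives $\vee,\wedge,\to$ and constants $\top,\bot$ such that for all $a,b$ and all $T\in TPTh_{\mathcal{L}}$: $a\vee b\in T$ iff $a\in T$ or $b\in T$; $a\wedge b\in T$ iff $a,b\in T$; $a\to b\in T$ iff for every totally prime $T'\supseteq T$, $a\in T'$ implies $b\in T'$; $\top$ lies in every theory and $\bot$ in none. The order: $a\le b$ iff $S_a\subseteq S_b$, where $S_a=\{P\in PTh_{\mathcal{L}}: a\in P\}$; the paper identifies $a,b$ when $a\le b$ and $b\le a$. *)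

(* Defs.v *)
From HB Require Import structures.
From mathcomp Require Import all_boot.
From mathcomp Require Import boolp classical_sets cardinality.
Unset Printing Implicit Defensive.
Local Open Scope classical_set_scope.

Definition operation (E : Type) := {n : nat & ('I_n -> E) -> E}.

Definition binop_op {E : Type} (f : E -> E -> E) : operation E :=
  existT _ 2 (fun v : 'I_2 -> E => f (v ord0) (v ord_max)).
Definition const_op {E : Type} (c : E) : operation E :=
  existT _ 0 (fun _ : 'I_0 -> E => c).

Record abstract_logic := AbstractLogic {
  Expr : Type;
  Th : set (set Expr);
  Ops : set (operation Expr);
  Th_nonempty : Th !=set0;
  Th_capT : forall F : set (set Expr), F !=set0 -> F `<=` Th ->
     Th (\bigcap_(T in F) T)
}.

Section AbstractLogicDefs.
Variable L : abstract_logic.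
Local Notation E := (Expr L).

Definition chain (F : set (set E)) :=
  forall T1 T2, F T1 -> F T2 -> T1 `<=` T2 \/ T2 `<=` T1.

Definition closed_union_chains :=
  forall F : set (set E), F !=set0 -> F `<=` Th L -> chain F ->
    Th L (\bigcup_(T in F) T).

Definition prime_theory (T : set E) :=
  Th L T /\
  forall F : set (set E), F !=set0 -> finite_set F -> F `<=` Th L ->
    T = \bigcap_(U in F) U -> F T.

Definition totally_prime_theory (T : set E) :=
  Th L T /\
  forall F : set (set E), F !=set0 -> F `<=` Th L ->
    T = \bigcap_(U in F) U -> F T.

Definition PTh : set (set E) := prime_theory.
Definition TPTh : set (set E) := totally_prime_theory.

Definition S_ (a : E) : set (set E) := [set P | PTh P /\ P a].
Definition le_L (a b : E) : Prop := S_ a `<=` S_ b.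

End AbstractLogicDefs.

Definition intuitionistic (L : abstract_logic)
  (vee wedge imp : Expr L -> Expr L -> Expr L) (top bot : Expr L) : Prop :=
  closed_union_chains L /\
  [/\ [/\ Ops L (binop_op vee), Ops L (binop_op wedge), Ops L (binop_op imp),
          Ops L (const_op top) & Ops L (const_op bot)],
      (forall a b T, TPTh L T -> (T (vee a b) <-> T a \/ T b)),
      (forall a b T, TPTh L T -> (T (wedge a b) <-> T a /\ T b)),
      (forall a b T, TPTh L T ->
          (T (imp a b) <-> forall T', TPTh L T' -> T `<=` T' -> T' a -> T' b)) &
      ((forall T, Th L T -> T top) /\ (forall T, Th L T -> ~ T bot))].

(* Heyting algebra on a preordered set (E, le), understood up to the
   identification a ~ b iff le a b /\ le b a: a bounded lattice with meet,
   join, least and greatest element, and relative pseudocomplement. *)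
Definition heyting_preorder {E : Type} (le : E -> E -> Prop)
  (meet join imp : E -> E -> E) (bot top : E) : Prop :=
  [/\ (forall a, le a a) /\ (forall a b c, le a b -> le b c -> le a c),
      (forall a b c, le c (meet a b) <-> le c a /\ le c b),
      (forall a b c, le (join a b) c <-> le a c /\ le b c),
      (forall a, le bot a /\ le a top) &
      (forall a b c, le (meet c a) b <-> le c (imp a b))].

(* Main.v *)
Require Import Defs.
From mathcomp Require Import all_boot boolp classical_sets cardinality.
Local Open Scope classical_set_scope.

Section Aux.
Variable L : abstract_logic.
Local Notation E := (Expr L).

Lemma ext_tp (P : set E) b : closed_union_chains L -> Th L P -> ~ P b ->
  exists T, TPTh L T /\ P `<=` T /\ ~ T b.
Proof.
move=> cuc thP nPb.
pose Z := [set Q : set E | Th L (P `|` Q) /\ ~ (P `|` Q) b].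
have [A [[thM nMb] Amax]] : exists A, Z A /\ forall B, A `<` B -> ~ Z B.
  apply: Zorn_bigcup => F FZ tot.
  have [->|Fne] := eqVneq F set0.
    by rewrite /Z /= bigcup_set0 setU0; split => //; case.
  have FU : P `|` \bigcup_(X in F) X = \bigcup_(T in [set P `|` Q | Q in F]) T.
    apply/seteqP; split=> x /=.
    - case=> [Px|[Q FQ Qx]].
      + case/set0P: Fne => Q FQ; exists (P `|` Q); first by exists Q.
        by left.
      + by exists (P `|` Q); [exists Q | right].
    - by case=> _ [Q FQ <-] [Px|Qx]; [left|right; exists Q].
  rewrite /Z /= FU; split.
  - apply: cuc.
    + by case/set0P: Fne => Q FQ; exists (P `|` Q); exists Q.
    + by move=> _ [Q FQ <-]; case: (FZ Q FQ).
    + move=> _ _ [Q1 F1 <-] [Q2 F2 <-].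
      case: (tot Q1 Q2 F1 F2) => h; [left|right]; by apply: setUS.
  - case=> [Pb|[Q FQ Qb]]; first exact: nPb.
    by case: (FZ Q FQ) => _; apply; right.
set M := P `|` A.
exists M; split; last by split => //; apply: subsetUl.
split => // F Fne FTh MF.
apply: contrapT => nFM.
apply: nMb; rewrite -/M MF => U FU.
apply: contrapT => nUb.
have MU : M `<=` U by rewrite MF; apply: bigcap_inf.
have PUU : P `|` U = U.
  apply/seteqP; split=> x; last by move=> Ux; right.
  by case=> // Px; apply: MU; left.
have AU : A `<=` U by move=> x Ax; apply: MU; right.
have : ~ (A `<` U).
  by move=> AU'; apply: (Amax U AU'); split; [rewrite PUU; exact: FTh | case].
move=> nprop.
have AeU : A = U.
  apply: contrapT => neq; apply: nprop; split => //.
  move=> UA; apply: neq; apply/seteqP; split => //.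
apply: nFM.
have -> : M = U by rewrite /M AeU.
exact.
Qed.

Lemma le_TP a b : closed_union_chains L ->
  le_L L a b <-> (forall T, TPTh L T -> T a -> T b).
Proof.
move=> cuc; split.
- move=> hab T [thT tpT] Ta.
  have : S_ L a T.
    split => //; split => // F Fne _ FTh eq; exact: tpT.
  by case/hab.
- move=> h P [[thP prP] Pa]; split; first by split.
  apply: contrapT => nPb.
  have [T [tpT [PT nTb]]] := @ext_tp P b cuc thP nPb.
  by apply: nTb; apply: h => //; apply: PT.
Qed.
End Aux.

Theorem corollary4p3 (L : abstract_logic)
  (vee wedge imp : Expr L -> Expr L -> Expr L) (top bot : Expr L) :
  intuitionistic L vee wedge imp top bot ->
  heyting_preorder (@le_L L) wedge vee imp bot top.
Proof.
move=> [cuc [_ Hv Hw Hi [Ht Hb]]].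
have le := fun a b => @le_TP L a b cuc.
split.
- split; first by move=> a; apply/le.
  move=> a b c /le h1 /le h2; apply/le => T tT Ta; exact: (h2 T tT (h1 T tT Ta)).
- move=> a b c; rewrite !le; split.
  + by move=> h; split => T tT Tc; have /(Hw _ _ _ tT) [] := h T tT Tc.
  + by move=> [h1 h2] T tT Tc; apply/(Hw _ _ _ tT); split; [apply: h1|apply: h2].
- move=> a b c; rewrite !le; split.
  + by move=> h; split => T tT Ta; apply: h => //; apply/(Hv _ _ _ tT); [left|right].
  + by move=> [h1 h2] T tT /(Hv _ _ _ tT) [Ta|Tb]; [apply: h1|apply: h2].
- move=> a; rewrite !le; split => T [thT _] ?.
  + by exfalso; apply: (Hb T thT).
  + exact: Ht.
- move=> a b c; rewrite !le; split.
  + move=> h T tT Tc; apply/(Hi _ _ _ tT) => T' tT' TT' T'a.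
    by apply: h => //; apply/(Hw _ _ _ tT'); split => //; apply: TT'.
  + move=> h T tT /(Hw _ _ _ tT) [Tc Ta].
    by move: (h T tT Tc) => /(Hi _ _ _ tT); apply.
Qed.
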